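(* Let $x=(x_0x_1)^{-1}$ and $y=x_2xx_2^{-1}$. For every integer $n\ge1$, $x^n$ has one of the forms $M_0([28,235,129],[29,211,263],\dots)$, $M_0([28,235,129],[46,138,451],\dots)$, $M_{2^r-1}([51,89,196],[0,0,0],\dots)$ for some odd $r\ge1$, or $M_{2^r-1}([28,235,129],[0,0,0],\dots)$ for some even $r\ge2$; and for every $n\ge1$, $y^n$ has one of the forms $M_0([28,235,129],[58,3,445],\dots)$, $M_0([28,235,129],[9,90,377],\dots)$, $M_{2^r-1}([51,89,196],[0,157,106],\dots)$ for some odd $r\ge1$, or $M_{2^r-1}([28,235,129],[39,208,186],\dots)$ for some even $r\ge2$.
   Context: Consider infinite upper unitriangular block matrices $X=(X_{r,s})_{r,s\ge1}$ whose entries are $3\times3$ matrices over $\mathbb F_2$, with $X_{r,r}=I$, $X_{r,s}=0$ for $s<r$, and whose upper diagonals are $3$-periodic: for each $j\ge1$ there are $a_{j1},a_{j2},a_{j3}\in M(3,\mathbb F_2)$ with $X_{r,r+j}=a_{j,i}$, where $i\in\{1,2,3\}$, $i\equiv r\pmod 3$; $a_j=[a_{j1},a_{j2},a_{j3}]$ is the $j$-th upper diagonal. For $l\ge0$, $M_l(c_1,c_2,\dots)$ denotes such a matrix whose first $l$ upper diagonals are zero and whose $(l+1)$-st, $(l+2)$-nd, $\dots$ upper diagonals are $c_1,c_2,\dots$; diagonals hidden in ''$\dots$'' are unspecified, while a matrix written $M_0(c_1,\dots,c_m)$ without dots has all further diagonals zero. A matrix $u=(u_{pq})\in M(3,\mathbb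 F_2)$ is encoded by the integer $256u_{11}+128u_{12}+64u_{13}+32u_{21}+16u_{22}+8u_{23}+4u_{31}+2u_{32}+u_{33}$, and a diagonal by the triple of integers of its three blocks. The elements are $x_0=M_0([11,11,11],[17,17,17],[26,26,26],[11,11,0],[17,0,0])$, $x_1=M_0([23,224,138],[59,136,495],[26,488,227],[23,224,0],[59,0,0])$, $x_2=M_0([46,68,217],[12,194,363],[26,326,77],[46,68,0],[12,0,0])$. *)

(* Defs.v *)
From mathcomp Require Import all_boot all_order all_algebra.
Set Implicit Arguments. Unset Strict Implicit. Unset Printing Implicit Defensive.
Import GRing.Theory.
Local Open Scope ring_scope.

Notation blk := 'M['F_2]_3.

(* A 3-periodic upper unitriangular block matrix X = (X_{r,s}) is stored by
   its diagonals: [D j i] is the block a_{j,i+1} (i : 'I_3 is 0-based), i.e.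
   X_{r,r+j} = D j i whenever r = i+1 (mod 3).  Diagonal 0 is the identity. *)
Definition BM := nat -> 'I_3 -> blk.

(* class of row r+k when row r has class i *)
Definition shift3 (i : 'I_3) (k : nat) : 'I_3 := inord ((i + k) %% 3).

Definition bm_one : BM := fun j _ => if j == 0%N then 1%:M else 0.

Definition bm_mul (X Y : BM) : BM :=
  fun j i => \sum_(k < j.+1) X k i *m Y (j - k)%N (shift3 i k).

Fixpoint bm_pow (X : BM) (n : nat) : BM :=
  match n with 0 => bm_one | n'.+1 => bm_mul X (bm_pow X n') end.

(* Inverse: the unique Z with Z_0 = I and (XZ)_j = 0 for j >= 1, obtained by
   solving the triangular system diagonal by diagonal:
   Z_{j,i} = - sum_{k=1}^{j} X_{k,i} Z_{j-k, i+k}.  [bm_inv_aux n] is correct on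
   diagonals j <= n. *)
Fixpoint bm_inv_aux (X : BM) (n : nat) : BM :=
  match n with
  | 0 => bm_one
  | n'.+1 => let Z := bm_inv_aux X n' in
      fun j i => if j == 0%N then 1%:M
                 else - \sum_(k < j) X k.+1 i *m Z (j - k.+1)%N (shift3 i k.+1)
  end.
Definition bm_inv (X : BM) : BM := fun j i => bm_inv_aux X j j i.

(* integer encoding: 256u11+128u12+64u13+32u21+16u22+8u23+4u31+2u32+u33 *)
Definition code_mx (c : nat) : blk :=
  \matrix_(p < 3, q < 3) (odd (c %/ 2 ^ (8 - (3 * p + q))))%:R.

Definition code_diag (t : nat * nat * nat) : 'I_3 -> blk :=
  fun i => let: (a, b, c) := t in
           code_mx (if i == 0 :> nat then a else if i == 1 :> nat then b else c).

Definition M0fin (ds : seq (nat * nat * nat)) : BM :=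
  fun j i => if j == 0%N then 1%:M
             else if (j <= size ds)%N then code_diag (nth (0, 0, 0)%N ds j.-1) i
             else 0.

Definition has_form (X : BM) (l : nat) (c1 c2 : nat * nat * nat) : Prop :=
  (forall j i, (1 <= j <= l)%N -> X j i = 0) /\
  (forall i, X l.+1 i = code_diag c1 i) /\
  (forall i, X l.+2 i = code_diag c2 i).

Definition x0 : BM := M0fin [:: (11,11,11); (17,17,17); (26,26,26); (11,11,0); (17,0,0)]%N.
Definition x1 : BM := M0fin [:: (23,224,138); (59,136,495); (26,488,227); (23,224,0); (59,0,0)]%N.
Definition x2 : BM := M0fin [:: (46,68,217); (12,194,363); (26,326,77); (46,68,0); (12,0,0)]%N.

(* Main.v *)
Require Import Defs.
From mathcomp Require Import all_boot all_order all_algebra.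
From Stdlib Require Import FunctionalExtensionality.
From mathcomp Require Import zify.
Import GRing.Theory.
Local Open Scope ring_scope.

Lemma shift3_val (i : 'I_3) k : shift3 i k = ((i + k) %% 3)%N :> nat.
Proof. by rewrite /shift3 inordK // ltn_pmod. Qed.

Lemma shift3_0 (i : 'I_3) : shift3 i 0 = i.
Proof. by apply: ord_inj; rewrite shift3_val addn0 modn_small. Qed.

Lemma shift3_add (i : 'I_3) a b : shift3 (shift3 i a) b = shift3 i (a + b).
Proof. by apply: ord_inj; rewrite !shift3_val modnDml addnA. Qed.

Lemma shift3_mod (i : 'I_3) k : shift3 i (k %% 3) = shift3 i k.
Proof. by apply: ord_inj; rewrite !shift3_val modnDmr. Qed.

Lemma bm_mulA X Y Z j i :
  bm_mul (bm_mul X Y) Z j i = bm_mul X (bm_mul Y Z) j i.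
Proof.
rewrite /bm_mul.
under eq_bigr do rewrite mulmx_suml.
under [RHS]eq_bigr do rewrite mulmx_sumr.
pose G (l k : nat) := (X l i *m Y (k - l)%N (shift3 i l)) *m Z (j - k)%N (shift3 i k).
transitivity (\sum_(k < j.+1) \sum_(l < j.+1) (if (l <= k)%N then G l k else 0)).
  apply: eq_bigr => k _; rewrite (big_ord_widen j.+1 (fun l : nat => G l k)) ?ltnS ?leq_ord //.
  by rewrite big_mkcond.
rewrite exchange_big /=; apply: eq_bigr => l _.
rewrite -big_mkcond /= -(big_geq_mkord l j.+1 xpredT) -{1}(add0n l) big_addn big_mkord subSn ?leq_ord //.
apply: eq_bigr => m _; rewrite /G addnK mulmxA shift3_add; congr (_ *m Z _ _).
  by rewrite addnC subnDA.
by rewrite addnC.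
Qed.

Lemma bm_mul1 X j i : bm_mul bm_one X j i = X j i.
Proof.
rewrite /bm_mul big_ord_recl /= subn0 shift3_0 mul1mx big1 ?addr0 // => k _.
by rewrite /bm_one /= mul0mx.
Qed.

Lemma bm_powD X a b : bm_pow X (a + b) = bm_mul (bm_pow X a) (bm_pow X b).
Proof.
elim: a => [|a IH] /=.
  by apply: functional_extensionality => j; apply: functional_extensionality => i; rewrite bm_mul1.
rewrite IH; apply: functional_extensionality => j; apply: functional_extensionality => i.
by rewrite bm_mulA.
Qed.

Lemma addxx (A : blk) : A + A = 0.
Proof.
apply/matrixP => p q; rewrite !mxE; case: (A p q) => [[|[|?]]] //= H; by apply/eqP.
Qed.

Lemma mulrn_odd (A : blk) m : A *+ m = A *+ odd m.
Proof.
rewrite -{1}(odd_double_half m) mulrnDr -mul2n mulrnA mulr2n addxx mul0rn addr0.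
by case: (odd m).
Qed.

Lemma mulmxnr (A B : blk) n : A *m (B *+ n) = (A *m B) *+ n.
Proof. by elim: n => [|n IH]; rewrite ?mulr0n ?mulmx0 // !mulrS mulmxDr IH. Qed.

Section Pow.
Variable X : BM.
Hypothesis X0 : forall i, X 0 i = 1%:M.

Lemma pow_d0 m i : bm_pow X m 0 i = 1%:M.
Proof.
elim: m i => [|m IH] i //=.
by rewrite /bm_mul big_ord1 /= IH X0 mul1mx.
Qed.

Lemma pow_d1 m i : bm_pow X m 1 i = X 1 i *+ m.
Proof.
elim: m i => [|m IH] i; first by rewrite mulr0n.
rewrite /= /bm_mul !big_ord_recr big_ord0 /= add0r X0 shift3_0 IH pow_d0 mul1mx mulmx1.
by rewrite mulrS addrC.
Qed.

Lemma pow_d2 m i : bm_pow X m 2 i = X 2 i *+ m + (X 1 i *m X 1 (shift3 i 1)) *+ 'C(m, 2).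
Proof.
elim: m i => [|m IH] i; first by rewrite !mulr0n addr0.
rewrite /= /bm_mul !big_ord_recr big_ord0 /= add0r X0 shift3_0 IH pow_d0 pow_d1 mul1mx mulmx1.
rewrite binS bin1 mulmxnr mulrS mulrnDr.
rewrite [X _ i *+ m.+1]mulrSr -!addrA; congr (_ + _); by rewrite [X _ i + _]addrC addrA.
Qed.
End Pow.


Definition hf (Y : BM) l (A B : 'I_3 -> blk) :=
  (forall j i, (1 <= j <= l)%N -> Y j i = 0) /\
  (forall i, Y l.+1 i = A i) /\ (forall i, Y l.+2 i = B i).

Lemma sq_mid Y (Y0 : forall i, Y 0 i = 1%:M) j i :
  bm_mul Y Y j.+1 i = \sum_(k < j) Y k.+1 i *m Y (j - k)%N (shift3 i k.+1).
Proof.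
have b0 k : bump 0 k = k.+1 by [].
rewrite /bm_mul big_ord_recl big_ord_recr /= subn0 subnn !Y0 shift3_0 mul1mx mulmx1.
rewrite addrA [Y j.+1 i + _]addrC -addrA addxx addr0.
by apply: eq_bigr => k _; rewrite b0.
Qed.

Lemma sq_form Y l A B : (forall i, Y 0 i = 1%:M) -> hf Y l A B ->
  hf (bm_mul Y Y) (l + l).+1 (fun i => A i *m A (shift3 i l.+1))
     (fun i => A i *m B (shift3 i l.+1) + B i *m A (shift3 i l.+2)).
Proof.
move=> Y0 [Hz [HA HB]]; split; [|split].
- move=> [|j] i // /andP [_ Hj]; rewrite sq_mid // big1 // => k _.
  case: (leqP k.+1 l) => Hk; first by rewrite Hz ?mul0mx.
  have := ltn_ord k; move=> Hkj.
  by rewrite (Hz (j - k)%N) ?mulmx0 //; apply/andP; split; lia.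
- move=> i; rewrite sq_mid //.
  have H : (l < (l + l).+1)%N by lia.
  rewrite (bigD1 (Ordinal H)) //= big1 ?addr0.
    by rewrite HA; congr (_ *m _); rewrite -HA; congr Y; lia.
  move=> k /eqP nk; have nk' : (k : nat) != l by apply/eqP => e; apply nk; apply: ord_inj.
  have := ltn_ord k; move=> Hkj.
  case: (leqP k.+1 l) => Hk; first by rewrite Hz ?mul0mx.
  by rewrite (Hz ((l + l).+1 - k)%N) ?mulmx0 //; apply/andP; split; lia.
- move=> i; rewrite sq_mid //.
  have H1 : (l < (l + l).+2)%N by lia.
  have H2 : (l.+1 < (l + l).+2)%N by lia.
  rewrite (bigD1 (Ordinal H1)) //= (bigD1 (Ordinal H2)) /=; last by apply/eqP => e; have := congr1 val e => /=; lia.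
  rewrite big1 ?addr0.
    rewrite HA HB; congr (_ *m _ + _).
      by rewrite -HB; congr Y; lia.
    by rewrite -HA; congr (_ *m Y _ _); lia.
  move=> k /andP [/eqP nk1 /eqP nk2].
  have nk1' : (k : nat) != l by apply/eqP => e; apply nk1; apply: ord_inj.
  have nk2' : (k : nat) != l.+1 by apply/eqP => e; apply nk2; apply: ord_inj.
  have := ltn_ord k; move=> Hkj.
  case: (leqP k.+1 l) => Hk; first by rewrite Hz ?mul0mx.
  by rewrite (Hz ((l + l).+2 - k)%N) ?mulmx0 //; apply/andP; split; lia.
Qed.

Definition i0 : 'I_3 := @Ordinal 3 0 isT.
Definition i1 : 'I_3 := @Ordinal 3 1 isT.
Definition i2 : 'I_3 := @Ordinal 3 2 isT.

Lemma big_ord3 (V : nmodType) (F : 'I_3 -> V) : \sum_(k < 3) F k = F i0 + F i1 + F i2.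
Proof.
rewrite !big_ord_recr big_ord0 /= add0r; congr (_ + _ + _); congr F; exact: val_inj.
Qed.

Lemma mulmx3 (A B : blk) : A *m B = \matrix_(p, q) (A p i0 * B i0 q + A p i1 * B i1 q + A p i2 * B i2 q).
Proof. by apply/matrixP=> p q; rewrite !mxE big_ord3. Qed.

Ltac ord3 p := let H := fresh in case: p => [[|[|[|?]]] H] //.

Definition toM (f : nat -> nat -> bool) : blk := \matrix_(p < 3, q < 3) (f p q)%:R.
Definition mulb (f g : nat -> nat -> bool) p q :=
  xorb (f p 0 && g 0 q)%N (xorb (f p 1 && g 1 q)%N (f p 2 && g 2 q)%N).
Definition addb' (f g : nat -> nat -> bool) p q := xorb (f p q) (g p q).
Definition codeb (c : nat) p q := odd (c %/ 2 ^ (8 - (3 * p + q))).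

Lemma F2b (a b : bool) : (a%:R + b%:R : 'F_2) = (xorb a b)%:R.
Proof. by case: a; case: b => //; apply/eqP. Qed.
Lemma F2m (a b : bool) : (a%:R * b%:R : 'F_2) = (a && b)%:R.
Proof. by case: a; case: b => //=; rewrite ?mulr0 ?mulr1. Qed.

Lemma toM_mul f g : toM f *m toM g = toM (mulb f g).
Proof.
rewrite mulmx3; apply/matrixP => p q; rewrite !mxE !F2m !F2b /mulb; congr (_%:R).
by case: (f p 0 && g 0 q)%N (f p 1 && g 1 q)%N (f p 2 && g 2 q)%N => [] [] [].
Qed.
Lemma toM_add f g : toM f + toM g = toM (addb' f g).
Proof. by apply/matrixP => p q; rewrite !mxE F2b. Qed.
Lemma toM_opp f : - toM f = toM f.
Proof. by apply/matrixP => p q; rewrite !mxE; case: (f p q) => //; apply/eqP. Qed.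
Lemma toM_code c : code_mx c = toM (codeb c).
Proof. by apply/matrixP => p q; rewrite !mxE. Qed.
Lemma toM_1 : 1%:M = toM (fun p q => p == q).
Proof. by apply/matrixP => p q; rewrite !mxE. Qed.
Lemma toM_0 : 0 = toM (fun p q => false).
Proof. by apply/matrixP => p q; rewrite !mxE. Qed.

Definition checkb (f g : nat -> nat -> bool) :=
  all (fun p => all (fun q => f p q == g p q) (iota 0 3)) (iota 0 3).
Lemma toM_check f g : checkb f g -> toM f = toM g.
Proof.
move=> H; apply/matrixP => p q; rewrite !mxE.
move/allP: H => /(_ p); rewrite mem_iota ltn_ord => /(_ isT) /allP /(_ q).
by rewrite mem_iota ltn_ord => /(_ isT) /eqP ->.
Qed.

Ltac blk_check := rewrite ?toM_code ?toM_1 ?toM_0 ?(toM_mul, toM_add, toM_opp);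
  apply: toM_check; vm_compute; reflexivity.

Definition X := bm_inv (bm_mul x0 x1).

Ltac cdtac i := rewrite /code_diag ?shift3_val; ord3 i; rewrite /=; blk_check.

Lemma X0 i : X 0 i = 1%:M.
Proof. by []. Qed.

Lemma X1 i : X 1 i = code_diag (28,235,129)%N i.
Proof.
rewrite /X /bm_inv /= /bm_mul !big_ord_recr !big_ord0 /= /x0 /x1 /M0fin /code_diag /bm_one /= !shift3_val.
ord3 i; rewrite /=; blk_check.
Qed.

Lemma X2 i : X 2 i = code_diag (29,211,263)%N i.
Proof.
rewrite /X /bm_inv /= /bm_mul !big_ord_recr !big_ord0 /= /x0 /x1 /M0fin /code_diag /bm_one /= !shift3_val.
ord3 i; rewrite /=; blk_check.
Qed.

Definition Yv := bm_mul (bm_mul x2 X) (bm_inv x2).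

Lemma Y0 i : Yv 0 i = 1%:M.
Proof.
rewrite /Yv /bm_mul !big_ord_recr !big_ord0 !X0.
rewrite /= /x2 /M0fin /bm_inv /= /bm_one /=.
by rewrite !add0r !mul1mx.
Qed.

Lemma Y1 i : Yv 1 i = code_diag (28,235,129)%N i.
Proof.
rewrite /Yv /bm_mul !big_ord_recr !big_ord0 !X1 !X0.
rewrite /= /x2 /M0fin /bm_inv /= /bm_mul !big_ord_recr !big_ord0 /= /bm_one /code_diag /= !shift3_val.
ord3 i; rewrite /=; blk_check.
Qed.

Lemma Y2 i : Yv 2 i = code_diag (58,3,445)%N i.
Proof.
rewrite /Yv /bm_mul !big_ord_recr !big_ord0 !X2 !X1 !X0.
rewrite /= /x2 /M0fin /bm_inv /= /bm_mul !big_ord_recr !big_ord0 /= /bm_one /code_diag /= !shift3_val.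
ord3 i; rewrite /=; blk_check.
Qed.

Definition sq (Y : BM) := bm_mul Y Y.

Lemma sq0 Y : (forall i, Y 0 i = 1%:M) -> forall i, sq Y 0 i = 1%:M.
Proof. by move=> H i; rewrite /sq /bm_mul big_ord1 /= H shift3_0 H mulmx1. Qed.

Lemma iter_sq0 Y r : (forall i, Y 0 i = 1%:M) -> forall i, iter r sq Y 0 i = 1%:M.
Proof. by move=> H; elim: r => [|r IH] //=; apply: sq0. Qed.

Lemma hf_ext Y l A B A' B' : (forall i, A i = A' i) -> (forall i, B i = B' i) ->
  hf Y l A B -> hf Y l A' B'.
Proof. by move=> eA eB [H1 [H2 H3]]; split; [|split] => // i; rewrite -?eA -?eB. Qed.

Lemma pow2mod3 r : (2 ^ r %% 3 = if odd r then 2 else 1)%N.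
Proof.
elim: r => [|r IH] //; rewrite expnS -modnMmr IH /=.
by case: (odd r).
Qed.

Lemma shl1 r (i : 'I_3) : shift3 i ((2 ^ r - 1).+1)%N = shift3 i (if odd r then 2 else 1)%N.
Proof.
have h : ((2 ^ r - 1).+1 = 2 ^ r)%N by have := expn_gt0 2 r; lia.
by rewrite h -shift3_mod pow2mod3.
Qed.

Lemma shl2 r (i : 'I_3) : shift3 i ((2 ^ r - 1).+2)%N = if odd r then i else shift3 i 2.
Proof.
have h : ((2 ^ r - 1).+2 = 2 ^ r + 1)%N by have := expn_gt0 2 r; lia.
rewrite h -shift3_mod -modnDml pow2mod3.
by case: (odd r) => //=; rewrite shift3_0.
Qed.

Lemma iter_form Z a c b Bo Be :
  (forall i, Z 0 i = 1%:M) -> hf Z 0 a b ->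
  (forall i, a i *m a (shift3 i 1) = c i) ->
  (forall i, c i *m c (shift3 i 2) = a i) ->
  (forall i, a i *m b (shift3 i 1) + b i *m a (shift3 i 2) = Bo i) ->
  (forall i, a i *m Be (shift3 i 1) + Be i *m a (shift3 i 2) = Bo i) ->
  (forall i, c i *m Bo (shift3 i 2) + Bo i *m c i = Be i) ->
  forall r, (1 <= r)%N ->
  hf (iter r sq Z) (2 ^ r - 1)%N (if odd r then c else a) (if odd r then Bo else Be).
Proof.
move=> Z0 hZ F1 F2 F3 F4 F5; elim=> [|r IH] // _.
case: r IH => [|r] IH.
  have := @sq_form _ _ _ _ Z0 hZ; apply: hf_ext => i /=; by [rewrite F1 | rewrite F3].
have {}IH := IH isT.
rewrite iterS; have := @sq_form _ _ _ _ (@iter_sq0 _ r.+1 Z0) IH.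
have -> : (((2 ^ r.+1 - 1) + (2 ^ r.+1 - 1)).+1 = 2 ^ r.+2 - 1)%N.
  by rewrite (expnS 2 r.+1); have := expn_gt0 2 r.+1; lia.
apply: hf_ext => i; rewrite ?shl1 ?shl2 /=; case: (odd r) => /=.
- by rewrite F1.
- by rewrite F2.
- by rewrite F4.
- by rewrite F5.
Qed.

Lemma pow_iter X r m : bm_pow X (2 ^ r * m)%N = iter r sq (bm_pow X m).
Proof.
elim: r => [|r IH]; first by rewrite mul1n.
by rewrite iterS -IH /sq -bm_powD expnS -mulnA mul2n -addnn.
Qed.

Lemma decomp n : (1 <= n)%N -> exists r m, odd m /\ n = (2 ^ r * m)%N.
Proof.
elim: n {-2}n (leqnn n) => [|N IH] n Hn n1; first by lia.
case Ho: (odd n); first by exists 0%N, n; rewrite mul1n.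
have e := odd_double_half n; rewrite Ho add0n in e.
have [||r [m [om em]]] := IH n./2; [lia|lia|].
exists r.+1, m; split => //; rewrite -e em expnS -mulnA; lia.
Qed.

Lemma main_gen Xm (a b b' c Bo Be : 'I_3 -> blk) :
  (forall i, Xm 0 i = 1%:M) -> (forall i, Xm 1 i = a i) -> (forall i, Xm 2 i = b i) ->
  (forall i, b i + a i *m a (shift3 i 1) = b' i) ->
  (forall i, a i *m a (shift3 i 1) = c i) ->
  (forall i, c i *m c (shift3 i 2) = a i) ->
  (forall i, a i *m b (shift3 i 1) + b i *m a (shift3 i 2) = Bo i) ->
  (forall i, a i *m b' (shift3 i 1) + b' i *m a (shift3 i 2) = Bo i) ->
  (forall i, a i *m Be (shift3 i 1) + Be i *m a (shift3 i 2) = Bo i) ->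
  (forall i, c i *m Bo (shift3 i 2) + Bo i *m c i = Be i) ->
  forall n, (1 <= n)%N ->
  hf (bm_pow Xm n) 0 a b \/ hf (bm_pow Xm n) 0 a b' \/
  (exists r, odd r /\ hf (bm_pow Xm n) (2 ^ r - 1)%N c Bo) \/
  (exists r, ~~ odd r /\ (2 <= r)%N /\ hf (bm_pow Xm n) (2 ^ r - 1)%N a Be).
Proof.
move=> X0 X1 X2 Fb F1 F2 F3 F3' F4 F5 n /decomp [r [m [om ->]]].
pose b0 := if odd 'C(m, 2) then b' else b.
have hZ : hf (bm_pow Xm m) 0 a b0.
  split; [by move=> [|[|]] |split] => i.
    by rewrite (@pow_d1 Xm X0) mulrn_odd om X1.
  rewrite (@pow_d2 Xm X0) mulrn_odd om X2 X1 X1 [_ *+ 'C(m, 2)]mulrn_odd /b0.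
  by case: (odd 'C(m, 2)); rewrite ?addr0 ?Fb.
have Z0 := @pow_d0 Xm X0 m.
case: r => [|r].
  rewrite expn0 mul1n /b0 in hZ *; case: (odd 'C(m, 2)) hZ => hZ; [right; left | left] => //.
rewrite pow_iter.
have F3b : forall i, a i *m b0 (shift3 i 1) + b0 i *m a (shift3 i 2) = Bo i.
  by rewrite /b0; case: (odd 'C(m, 2)).
have := @iter_form _ _ _ _ _ _ Z0 hZ F1 F2 F3b F4 F5 r.+1 isT.
case Hr: (odd r.+1) => H; right; right; [left | right].
  by exists r.+1.
exists r.+1; rewrite Hr; split => //; split => //.
by case: r Hr {H} => // -[].
Qed.

Notation cd := code_diag.

Section XF.
Let a := cd (28,235,129)%N.
Let c := cd (51,89,196)%N.
Lemma F1 i : a i *m a (shift3 i 1) = c i. Proof. rewrite /a /c; cdtac i. Qed.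
Lemma F2 i : c i *m c (shift3 i 2) = a i. Proof. rewrite /a /c; cdtac i. Qed.
End XF.

Lemma FbX i : cd (29,211,263)%N i + cd (28,235,129)%N i *m cd (28,235,129)%N (shift3 i 1) = cd (46,138,451)%N i.
Proof. cdtac i. Qed.
Lemma F3X i : cd (28,235,129)%N i *m cd (29,211,263)%N (shift3 i 1) + cd (29,211,263)%N i *m cd (28,235,129)%N (shift3 i 2) = cd (0,0,0)%N i.
Proof. cdtac i. Qed.
Lemma F3X' i : cd (28,235,129)%N i *m cd (46,138,451)%N (shift3 i 1) + cd (46,138,451)%N i *m cd (28,235,129)%N (shift3 i 2) = cd (0,0,0)%N i.
Proof. cdtac i. Qed.
Lemma F4X i : cd (28,235,129)%N i *m cd (0,0,0)%N (shift3 i 1) + cd (0,0,0)%N i *m cd (28,235,129)%N (shift3 i 2) = cd (0,0,0)%N i.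
Proof. cdtac i. Qed.
Lemma F5X i : cd (51,89,196)%N i *m cd (0,0,0)%N (shift3 i 2) + cd (0,0,0)%N i *m cd (51,89,196)%N i = cd (0,0,0)%N i.
Proof. cdtac i. Qed.

Lemma FbY i : cd (58,3,445)%N i + cd (28,235,129)%N i *m cd (28,235,129)%N (shift3 i 1) = cd (9,90,377)%N i.
Proof. cdtac i. Qed.
Lemma F3Y i : cd (28,235,129)%N i *m cd (58,3,445)%N (shift3 i 1) + cd (58,3,445)%N i *m cd (28,235,129)%N (shift3 i 2) = cd (0,157,106)%N i.
Proof. cdtac i. Qed.
Lemma F3Y' i : cd (28,235,129)%N i *m cd (9,90,377)%N (shift3 i 1) + cd (9,90,377)%N i *m cd (28,235,129)%N (shift3 i 2) = cd (0,157,106)%N i.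
Proof. cdtac i. Qed.
Lemma F4Y i : cd (28,235,129)%N i *m cd (39,208,186)%N (shift3 i 1) + cd (39,208,186)%N i *m cd (28,235,129)%N (shift3 i 2) = cd (0,157,106)%N i.
Proof. cdtac i. Qed.
Lemma F5Y i : cd (51,89,196)%N i *m cd (0,157,106)%N (shift3 i 2) + cd (0,157,106)%N i *m cd (51,89,196)%N i = cd (39,208,186)%N i.
Proof. cdtac i. Qed.

Theorem corollary4p4 :
  let x := bm_inv (bm_mul x0 x1) in
  let y := bm_mul (bm_mul x2 x) (bm_inv x2) in
  (forall n : nat, (1 <= n)%N ->
     has_form (bm_pow x n) 0 (28,235,129)%N (29,211,263)%N \/
     has_form (bm_pow x n) 0 (28,235,129)%N (46,138,451)%N \/
     (exists r : nat, odd r /\ has_form (bm_pow x n) (2 ^ r - 1) (51,89,196)%N (0,0,0)%N) \/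
     (exists r : nat, ~~ odd r /\ (2 <= r)%N /\
        has_form (bm_pow x n) (2 ^ r - 1) (28,235,129)%N (0,0,0)%N)) /\
  (forall n : nat, (1 <= n)%N ->
     has_form (bm_pow y n) 0 (28,235,129)%N (58,3,445)%N \/
     has_form (bm_pow y n) 0 (28,235,129)%N (9,90,377)%N \/
     (exists r : nat, odd r /\ has_form (bm_pow y n) (2 ^ r - 1) (51,89,196)%N (0,157,106)%N) \/
     (exists r : nat, ~~ odd r /\ (2 <= r)%N /\
        has_form (bm_pow y n) (2 ^ r - 1) (28,235,129)%N (39,208,186)%N)).
Proof.
move=> x y; split.
- exact: (@main_gen _ _ _ _ _ _ _ X0 X1 X2 FbX F1 F2 F3X F3X' F4X F5X).
- exact: (@main_gen _ _ _ _ _ _ _ Y0 Y1 Y2 FbY F1 F2 F3Y F3Y' F4Y F5Y).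
Qed.
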